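(* If $n\equiv 0$ or $n\equiv 1\pmod 4$, then $\mathcal{AM}_n$ is generated by $\mathcal{AO}_n\cup\{h\}$.
   Context: Let $n\geqslant 2$, $\Omega_n=\{1<2<\cdots<n\}$ and $\mathcal{I}_n$ the monoid of all partial injective maps of $\Omega_n$, composed left to right. $\mathcal{AI}_n$ is the set of all $\alpha\in\mathcal{I}_n$ with $\alpha=\sigma|_{\mathrm{Dom}(\alpha)}$ for some even permutation $\sigma$; $\mathcal{POI}_n$ (resp. $\mathcal{PMI}_n$) is the set of order-preserving (resp. order-preserving or order-reversing) elements; $\mathcal{AO}_n=\mathcal{AI}_n\cap\mathcal{POI}_n$, $\mathcal{AM}_n=\mathcal{AI}_n\cap\mathcal{PMI}_n$. $h$ is the permutation $i\mapsto n+1-i$ of $\Omega_n$ (which lies in $\mathcal{AM}_n$ when $n\equiv 0,1\pmod 4$). *)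

(* Defs.v *)
(* Omega_n = {1<...<n} is modelled by 'I_n = {0<...<n-1}
   (order-isomorphic via i |-> i+1). *)
From mathcomp Require Import all_boot all_order all_fingroup.
Set Implicit Arguments. Unset Strict Implicit. Unset Printing Implicit Defensive.

Definition ptrans (n : nat) := {ffun 'I_n -> option 'I_n}.

Definition pdom n (a : ptrans n) (x : 'I_n) : bool := a x != None.

Definition pinj n (a : ptrans n) : Prop :=
  forall x y z : 'I_n, a x = Some z -> a y = Some z -> x = y.

(* composition left to right: x (a * b) = (x a) b *)
Definition pcomp n (a b : ptrans n) : ptrans n := [ffun x => obind b (a x)].

Definition pid n : ptrans n := [ffun x => Some x].

Definition AI n (a : ptrans n) : Prop :=
  pinj a /\ exists s : 'S_n, ~~ odd_perm s /\ forall x y, a x = Some y -> y = s x.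

Definition order_preserving n (a : ptrans n) : Prop :=
  forall x y x' y' : 'I_n, a x = Some x' -> a y = Some y' -> (x <= y)%N -> (x' <= y')%N.

Definition order_reversing n (a : ptrans n) : Prop :=
  forall x y x' y' : 'I_n, a x = Some x' -> a y = Some y' -> (x <= y)%N -> (y' <= x')%N.

Definition POI n (a : ptrans n) : Prop := pinj a /\ order_preserving a.
Definition PMI n (a : ptrans n) : Prop := pinj a /\ (order_preserving a \/ order_reversing a).

Definition AO n (a : ptrans n) : Prop := AI a /\ POI a.
Definition AM n (a : ptrans n) : Prop := AI a /\ PMI a.

(* h : i |-> n+1-i, i.e. on 'I_n, i |-> n-1-i *)
Definition hmap n : ptrans n := [ffun x => Some (rev_ord x)].

Inductive gen_submonoid n (S : ptrans n -> Prop) : ptrans n -> Prop :=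
  | gen_id : gen_submonoid S (pid n)
  | gen_mul a b : S a -> gen_submonoid S b -> gen_submonoid S (pcomp a b).

(* Main.v *)
Require Import Defs.
From mathcomp Require Import all_boot all_order all_fingroup.
From mathcomp Require Import zify.
Set Implicit Arguments. Unset Strict Implicit. Unset Printing Implicit Defensive.

Lemma pcompE n (a b : ptrans n) x : Defs.pcomp a b x = obind b (a x).
Proof. by rewrite /Defs.pcomp ffunE. Qed.
Lemma hmapE n x : hmap n x = Some (rev_ord x).
Proof. by rewrite /hmap ffunE. Qed.
Lemma pidE n x : pid n x = Some x.
Proof. by rewrite /pid ffunE. Qed.
Ltac fE := rewrite ?pcompE ?hmapE ?pidE.

Lemma pcompP n (a b : ptrans n) x z :
  Defs.pcomp a b x = Some z -> exists u, a x = Some u /\ b u = Some z.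
Proof. rewrite pcompE; case: (a x) => [u|] //= H; by exists u. Qed.

Lemma pinj_comp n (a b : ptrans n) : pinj a -> pinj b -> pinj (Defs.pcomp a b).
Proof.
move=> ia ib x y z /pcompP [u [hu hz]] /pcompP [v [hv hz']].
have huv := ib _ _ _ hz hz'; subst v; exact: ia _ _ _ hu hv.
Qed.

Lemma AI_comp n (a b : ptrans n) : AI a -> AI b -> AI (Defs.pcomp a b).
Proof.
move=> [ia [s [es hs]]] [ib [t [et ht]]]; split; first exact: pinj_comp.
exists (s * t)%g; split; first by rewrite odd_permM (negbTE es) (negbTE et).
move=> x y /pcompP [u [hu hy]]; rewrite permM -(hs _ _ hu); exact: ht.
Qed.

Lemma op_op n (a b : ptrans n) : order_preserving a -> order_preserving b ->
  order_preserving (Defs.pcomp a b).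
Proof.
move=> ha hb x y x' y' /pcompP [u [hu h1]] /pcompP [v [hv h2]] le.
exact: hb _ _ _ _ h1 h2 (ha _ _ _ _ hu hv le).
Qed.

Lemma op_or n (a b : ptrans n) : order_preserving a -> order_reversing b ->
  order_reversing (Defs.pcomp a b).
Proof.
move=> ha hb x y x' y' /pcompP [u [hu h1]] /pcompP [v [hv h2]] le.
exact: hb _ _ _ _ h1 h2 (ha _ _ _ _ hu hv le).
Qed.

Lemma or_op n (a b : ptrans n) : order_reversing a -> order_preserving b ->
  order_reversing (Defs.pcomp a b).
Proof.
move=> ha hb x y x' y' /pcompP [u [hu h1]] /pcompP [v [hv h2]] le.
exact: hb _ _ _ _ h2 h1 (ha _ _ _ _ hu hv le).
Qed.

Lemma or_or n (a b : ptrans n) : order_reversing a -> order_reversing b ->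
  order_preserving (Defs.pcomp a b).
Proof.
move=> ha hb x y x' y' /pcompP [u [hu h1]] /pcompP [v [hv h2]] le.
exact: hb _ _ _ _ h2 h1 (ha _ _ _ _ hu hv le).
Qed.

Lemma rev_perm_aux n k : (k <= n./2)%N -> exists s : 'S_n,
  odd_perm s = odd k /\
  forall x : 'I_n, val (s x) = (if (x < k)%N || (n - k <= x)%N then n - x.+1 else x)%N.
Proof.
elim: k => [|k IH] hk.
  exists 1%g; split; first exact: odd_perm1.
  move=> x; rewrite perm1 /=; have := ltn_ord x; case: ifP => //; lia.
have [s [es hs]] := IH (ltnW hk).
have hk2 : (k.+1 * 2 <= n)%N.
  have := odd_double_half n; rewrite -muln2; move: hk; set m := n./2; lia.
clear IH; move: hk2 => {}hk.
have ka : (k < n)%N by move: hk; lia.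
have kb : (n - k.+1 < n)%N by move: hk; lia.
pose a := Ordinal ka; pose b := Ordinal kb.
exists (s * tperm a b)%g; split.
  rewrite odd_permM es odd_tperm /=.
  have -> : (a != b) = true.
    apply/negP => /eqP /(congr1 val) /=; move: hk; lia.
  by rewrite addbT.
move=> x; rewrite permM.
have hx := hs x; have ltx := ltn_ord x.
case: tpermP => [/(congr1 val) /= e|/(congr1 val) /= e|ne1 ne2] /=.
- move: e hk; rewrite hx; case: ifP; case: ifP; lia.
- move: e hk; rewrite hx; case: ifP; case: ifP; lia.
have n1 : nat_of_ord (s x) <> k by move=> e; apply: ne1; apply: val_inj.
have n2 : nat_of_ord (s x) <> (n - k.+1)%N by move=> e; apply: ne2; apply: val_inj.
have hx' : nat_of_ord (s x) = (if (x < k)%N || (n - k <= x)%N then n - x.+1 else x)%N := hx.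
move: n1 n2 hk hx'; case: ifP; case: ifP; lia.
Qed.

Lemma pinj_h n : pinj (hmap n).
Proof.
move=> x y z; fE => -[<-] [] e; apply: val_inj; have := ltn_ord x; have := ltn_ord y; move: e => /=; lia.
Qed.

Lemma AI_h n : (n %% 4 = 0 \/ n %% 4 = 1)%N -> AI (hmap n).
Proof.
move=> hn; split.
  exact: pinj_h.
have [s [es hs]] := rev_perm_aux (leqnn n./2).
exists s; split.
  rewrite es; case: hn => hn; apply/negP; move: hn; lia.
move=> x y; fE => -[<-]; apply: val_inj; rewrite hs /=.
have := ltn_ord x; case: ifP => //; lia.
Qed.

Lemma or_h n : order_reversing (hmap n).
Proof.
move=> x y x' y'; fE => -[<-] [<-] /=.
have := ltn_ord x; have := ltn_ord y; lia.
Qed.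


Lemma pcomp_pid n (a : ptrans n) : Defs.pcomp a (pid n) = a.
Proof. by apply/ffunP => x; fE; case: (a x) => //= u; fE. Qed.

Theorem lemma5p1 (n : nat) : (2 <= n)%N -> (n %% 4 = 0 \/ n %% 4 = 1)%N ->
  forall a : ptrans n, AM a <-> gen_submonoid (fun b => AO b \/ b = hmap n) a.
Proof.
move=> _ hn a; split.
  move=> [AIa [ia [op|or]]].
    rewrite -(pcomp_pid a); apply: gen_mul; last exact: gen_id.
    by left; split.
  pose c := Defs.pcomp (hmap n) a.
  have -> : a = Defs.pcomp (hmap n) (Defs.pcomp c (pid n)).
    rewrite pcomp_pid; apply/ffunP => x; fE => /=; fE => /=; by rewrite rev_ordK.
  apply: gen_mul; first by right.
  apply: gen_mul; last exact: gen_id.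
  left; split; first exact: AI_comp (AI_h hn) AIa.
  split; first exact: pinj_comp (@pinj_h n) ia.
  exact: or_or (@or_h n) or.
elim=> [|b c Hb _ [AIc [ic oc]]].
  split.
    split; first by move=> x y z; fE => -[<-] [<-].
    exists 1%g; split; first by rewrite odd_perm1.
    by move=> x y; fE; rewrite perm1 => -[<-].
  split; first by move=> x y z; fE => -[<-] [<-].
  by left; move=> x y x' y'; fE => -[<-] [<-].
case: Hb => [[AIb [ib ob]]|->].
  split; first exact: AI_comp.
  split; first exact: pinj_comp.
  case: oc => oc; [left; exact: op_op | right; exact: op_or].
split; first exact: AI_comp (AI_h hn) AIc.
split; first exact: pinj_comp (@pinj_h n) ic.
case: oc => oc; [right; exact: or_op (@or_h n) oc | left; exact: or_or (@or_h n) oc].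
Qed.
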